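(* Let $\Gamma=\{f_1,\dots,f_n\}$ be a family of weak weight-functions such that $f_i(x_1,\dots,x_n)\le f_i(x_1+\lambda,\dots,x_n+\lambda)$ for every $i\in\{1,\dots,n\}$, every $\mathbf{x}\in[0,1]^n$ and every $\lambda\in[0,1]$ with $(x_1+\lambda,\dots,x_n+\lambda)\in[0,1]^n$. Then $\mathsf{BGM}_\Gamma$ is a pre-aggregation function which is $(k,\dots,k)$-increasing for every $k>0$.
   Context: A family of weak weight-functions (wFWF) is a family $\Gamma=\{f_i:[0,1]^n\to[0,1]\mid 1\le i\le n\}$ such that (I) $\sum_{i=1}^n f_i(\mathbf{x})\le 1$ for all $\mathbf{x}\in[0,1]^n$ and (II) $\sum_{i=1}^n f_i(1,\dots,1)=1$. The bounded generalized mixture function is $\mathsf{BGM}_\Gamma(\mathbf{x})=\sum_{i=1}^n f_i(\mathbf{x})\,x_i$. For a nonzero $\mathbf{r}\in\mathbb{R}^n$, $F:[0,1]^n\to[0,1]$ is $\mathbf{r}$-increasing if $F(\mathbf{x})\le F(x_1+tr_1,\dots,x_n+tr_n)$ for all $\mathbf{x}\in[0,1]^n$ and $t>0$ with $(x_1+tr_1,\dots,x_n+tr_n)\in[0,1]^n$. $F$ is a pre-aggregation function if $F(0,\dots,0)=0$, $F(1,\dots,1)=1$ and $F$ is $\mathbf{r}$-increasing for some nonzero $\mathbf{r}\in[0,1]^n$. *)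

(* Defs.v *)
From mathcomp Require Import all_boot all_order all_algebra.
Set Implicit Arguments. Unset Strict Implicit. Unset Printing Implicit Defensive.
Import Order.TTheory GRing.Theory Num.Theory.
Local Open Scope ring_scope.

Section Defs.
Variables (R : realFieldType) (n : nat).

Definition in_cube (x : 'I_n -> R) : Prop := forall i, 0 <= x i <= 1.

Definition cst_pt (c : R) : 'I_n -> R := fun _ => c.

Definition shift (x : 'I_n -> R) (t : R) (r : 'I_n -> R) : 'I_n -> R :=
  fun i => x i + t * r i.

Definition wFWF (f : 'I_n -> ('I_n -> R) -> R) : Prop :=
  [/\ (forall i x, in_cube x -> 0 <= f i x <= 1),
      (forall x, in_cube x -> \sum_(i < n) f i x <= 1) &
      \sum_(i < n) f i (cst_pt 1) = 1].

Definition BGM (f : 'I_n -> ('I_n -> R) -> R) (x : 'I_n -> R) : R :=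
  \sum_(i < n) f i x * x i.

Definition r_increasing (r : 'I_n -> R) (F : ('I_n -> R) -> R) : Prop :=
  forall x t, in_cube x -> 0 < t -> in_cube (shift x t r) -> F x <= F (shift x t r).

Definition pre_aggregation (F : ('I_n -> R) -> R) : Prop :=
  [/\ (forall x, in_cube x -> 0 <= F x <= 1),
      F (cst_pt 0) = 0,
      F (cst_pt 1) = 1 &
      exists r : 'I_n -> R, (exists i, r i != 0) /\ in_cube r /\ r_increasing r F].

End Defs.

(* Main.v *)
Require Import Defs.
From mathcomp Require Import all_boot all_order all_algebra.
From Stdlib Require Import FunctionalExtensionality.
Import Order.TTheory GRing.Theory Num.Theory.
Local Open Scope ring_scope.

Theorem proposition10 (R : realFieldType) (n : nat)
    (f : 'I_n -> ('I_n -> R) -> R) :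
  wFWF f ->
  (forall (i : 'I_n) (x : 'I_n -> R) (lam : R),
      in_cube x -> 0 <= lam <= 1 -> in_cube (shift x lam (cst_pt 1)) ->
      f i x <= f i (shift x lam (cst_pt 1))) ->
  pre_aggregation (BGM f) /\
  (forall k : R, 0 < k -> r_increasing (cst_pt k) (BGM f)).
Proof.
move=> [H01 Hsum H1] Hmon.
have incr : forall k : R, 0 < k -> r_increasing (cst_pt k) (BGM f).
  move=> k k0 x t Hx t0 Hs.
  rewrite /BGM; apply: ler_sum => i _.
  have lam0 : 0 <= t * k by rewrite mulr_ge0 // ltW.
  have lam1 : t * k <= 1.
    have := Hs i; have := Hx i; rewrite /shift /cst_pt.
    move=> /andP[a _] /andP[_ b]; apply: le_trans b; by rewrite lerDr.
  have Heq : shift x t (cst_pt k) = shift x (t * k) (cst_pt 1).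
    apply: functional_extensionality => j; by rewrite /shift /cst_pt mulr1.
  have Hs' : in_cube (shift x (t * k) (cst_pt 1)) by rewrite -Heq.
  have Hf := Hmon i x (t*k) Hx (introT andP (conj lam0 lam1)) Hs'.
  rewrite Heq.
  have /andP[fx0 _] := H01 i x Hx.
  have /andP[xi0 _] := Hx i.
  apply: ler_pM => //.
  by rewrite /shift /cst_pt mulr1 lerDl.
split => //.
split.
- move=> x Hx; rewrite /BGM; apply/andP; split.
    apply: sumr_ge0 => i _; have /andP[a _] := H01 i x Hx; have /andP[b _] := Hx i.
    exact: mulr_ge0.
  apply: le_trans (Hsum x Hx); apply: ler_sum => i _.
  have /andP[a _] := H01 i x Hx; have /andP[_ b] := Hx i.
  by apply: ler_piMr.
- by rewrite /BGM big1 // => i _; rewrite /cst_pt mulr0.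
- by rewrite /BGM; under eq_bigr => i _ do rewrite /cst_pt mulr1; exact: H1.
- case: n f H01 Hsum H1 Hmon incr => [|m] f' _ _ H1' _ incr'.
    by move: H1'; rewrite big_ord0 => /eqP; rewrite eq_sym oner_eq0.
  exists (cst_pt 1); split; first by exists ord0; rewrite /cst_pt oner_eq0.
  split; first by move=> i; rewrite /cst_pt ler01 lexx.
  exact: incr'.
Qed.
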